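(* Let $n\geq 3$ and $m\geq 3$ be integers and $Q(z)=\sum_{i=0}^{m}\binom{m}{i}\frac{(-1)^{i}}{n+m+1-i} z^{n+m+1-i}$, $P(z)=Q(z)+1$. Then $Q(1)$ is not an integer. In particular, $P(1)\neq -1$. *)

(* Defs.v *)
From HB Require Import structures.
From mathcomp Require Import all_boot all_order all_algebra.
Set Implicit Arguments. Unset Strict Implicit. Unset Printing Implicit Defensive.
Import Order.TTheory GRing.Theory Num.Theory.
Local Open Scope ring_scope.

Definition Qpoly (n m : nat) : {poly rat} :=
  \sum_(i < m.+1)
     ((('C(m, i))%:R * (-1) ^+ i / ((n + m + 1 - i)%N)%:R) *: 'X^(n + m + 1 - i)).

Definition Ppoly (n m : nat) : {poly rat} := Qpoly n m + 1.

(* Main.v *)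
Require Import Defs.
From HB Require Import structures.
From mathcomp Require Import all_boot all_order all_algebra.
From mathcomp Require Import ring lra zify.
Import Order.TTheory GRing.Theory Num.Theory.
Local Open Scope ring_scope.

Definition ff (n m k : nat) : rat := ('C(m, k))%:R * (-1) ^+ k / ((n + 1 + k)%N)%:R.
Definition SS (n m : nat) : rat := \sum_(k < m.+1) ff n m k.
Definition BB (n m : nat) : rat := ((n`! * m`!)%N)%:R / (((n + m + 1)`!)%N)%:R.

Lemma SS_rec n m : SS n m.+1 = SS n m - SS n.+1 m.
Proof.
rewrite /SS big_ord_recl [in RHS]big_ord_recl.
have E : forall k : 'I_m.+1, ff n m.+1 (bump 0 k) = - ff n.+1 m k + ff n m k.+1.
  move=> k; rewrite /ff /bump /= add1n binS natrD exprS.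
  have -> : (n + 1 + k.+1 = n.+1 + 1 + k)%N by lia.
  ring.
under eq_bigr do rewrite E.
rewrite big_split /= sumrN.
have -> : \sum_(i < m.+1) ff n m i.+1 = \sum_(i < m) ff n m (bump 0 i).
  have h0 : ff n m m.+1 = 0 by rewrite /ff bin_small // !mul0r.
  by rewrite big_ord_recr /= h0 addr0.
have -> : ff n m.+1 0 = ff n m 0 by rewrite /ff !bin0.
ring.
Qed.

Lemma BB_rec n m : BB n m.+1 = BB n m - BB n.+1 m.
Proof.
rewrite /BB.
have -> : (n + m.+1 + 1 = (n + m + 1).+1)%N by lia.
have -> : (n.+1 + m + 1 = (n + m + 1).+1)%N by lia.
rewrite !factS !natrM.
have h1 : ((n + m + 1)`!)%:R != 0 :> rat by rewrite pnatr_eq0 -lt0n fact_gt0.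
have h2 : ((n + m + 1).+1)%:R != 0 :> rat by rewrite pnatr_eq0.
have -> : ((n + m + 1).+1)%:R = (n%:R + m%:R + 2) :> rat.
  by rewrite -addn1 !natrD; ring.
have -> : (m.+1)%:R = (m%:R + 1) :> rat by rewrite -addn1 natrD.
have -> : (n.+1)%:R = (n%:R + 1) :> rat by rewrite -addn1 natrD.
have h3 : (n%:R + m%:R + 2) != 0 :> rat.
  by rewrite -[2]/(2%:R) -!natrD pnatr_eq0 addn2.
field; by rewrite h1 h3.
Qed.

Lemma SS_BB n m : SS n m = BB n m.
Proof.
elim: m n => [|m IH] n.
  rewrite /SS /BB big_ord1 /ff bin0 expr0 mul1r addn0 addn0 addn1 factS fact0 !natrM.
  have h1 : (n`!)%:R != 0 :> rat by rewrite pnatr_eq0 -lt0n fact_gt0.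
  by field; rewrite h1 nat1r pnatr_eq0.
by rewrite SS_rec BB_rec !IH.
Qed.

Lemma Q1 n m : (Qpoly n m).[1] = (-1) ^+ m * BB n m.
Proof.
rewrite -SS_BB /Qpoly horner_sum /SS.
under eq_bigr do rewrite hornerZ hornerXn expr1n mulr1.
rewrite big_distrr /= (reindex_inj rev_ord_inj) /=.
apply: eq_bigr => k _; rewrite /ff /= subSS.
have hk : (k <= m)%N by rewrite -ltnS.
rewrite bin_sub //.
have -> : (n + m + 1 - (m - k) = n + 1 + k)%N by lia.
have hk2 : (-1) ^+ k * (-1) ^+ k = 1 :> rat.
  by rewrite -exprD addnn -mul2n exprM sqrrN expr1n.
have hm : (-1) ^+ m = (-1) ^+ (m - k) * (-1) ^+ k :> rat by rewrite -exprD subnK.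
rewrite hm; transitivity ('C(m, k)%:R * (-1) ^+ (m - k) / (n + 1 + k)%:R * ((-1) ^+ k * (-1) ^+ k) : rat); [by rewrite hk2 mulr1 | ring].
Qed.

Lemma BB_bounds n m (hn : (0 < n)%N) : 0 < BB n m < 1.
Proof.
rewrite /BB.
have hlt : (n`! * m`! < (n + m + 1)`!)%N.
  have h := @bin_fact (n + m) n (leq_addr _ _).
  rewrite addKn in h.
  have hC : (0 < 'C(n + m, n))%N by rewrite bin_gt0 leq_addr.
  apply: (@leq_ltn_trans (n + m)`!).
    rewrite -h mulnC -[X in (X <= _)%N]mul1n leq_mul2r hC orbT //.
  rewrite addn1 factS -[X in (X < _)%N]mul1n ltn_mul2r fact_gt0 /=.
  lia.
have hd : (0 < ((n + m + 1)`!)%:R :> rat) by rewrite ltr0n fact_gt0.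
apply/andP; split.
  by rewrite divr_gt0 ?ltr0n ?muln_gt0 ?fact_gt0 //=.
by rewrite ltr_pdivrMr // mul1r ltr_nat.
Qed.

Theorem lemma2p4 (n m : nat) (hn : (3 <= n)%N) (hm : (3 <= m)%N) :
  ~ ((Qpoly n m).[1] \is a Num.int) /\ (Ppoly n m).[1] <> -1.
Proof.
have notint : ~ ((Qpoly n m).[1] \is a Num.int).
  move=> hi.
  have hnz : (Qpoly n m).[1] != 0.
    rewrite Q1 mulf_eq0 negb_or signr_eq0 /=.
    by case/andP: (@BB_bounds n m (@leq_trans 3 1 n isT hn)) => h _; rewrite gt_eqF.
  have := norm_intr_ge1 hi hnz.
  rewrite Q1 normrM normrX normrN normr1 expr1n mul1r.
  case/andP: (@BB_bounds n m (@leq_trans 3 1 n isT hn)) => h0 h1.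
  rewrite ger0_norm ?(ltW h0) // => hge. by have := lt_le_trans h1 hge; rewrite ltxx.
split => // hP; apply: notint.
have -> : (Qpoly n m).[1] = -2.
  move: hP; rewrite /Ppoly hornerD hornerC => hP.
  by rewrite -[_.[1]](addrK 1) hP.
by rewrite rpredN.
Qed.
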